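(* Let $p\ge 1$ and $n\ge1$ be integers and let a finite set $W$ be partitioned into $p$ sets $W_1,\dots,W_p$, each of cardinality $n$. There is a family $\mathcal{F}=\{f_{o_1,\dots,o_p}: o_1\in W_1,\dots,o_p\in W_p\}$ of (weighted) coverage functions on the ground set $W$ satisfying: (Indistinguishability) for every $i\in[p]$, any two functions $f_{o_1,\dots,o_p},f_{o'_1,\dots,o'_p}\in\mathcal{F}$ with $o_1=o'_1,\dots,o_{i-1}=o'_{i-1}$ agree on every subset of $W_1\cup\cdots\cup W_i$; (Value gap) for every $f_{o_1,\dots,o_p}\in\mathcal{F}$, $f_{o_1,\dots,o_p}(W)=f_{o_1,\dots,o_p}(\{o_1,\dots,o_p\})\le 2p$ and $$\max_{S\subseteq W\setminus\{o_1,\dots,o_p\},\ |S|\le p} f_{o_1,\dots,o_p}(S)\ \le\ p+(H_p)^2\ \le\ \frac{p+(H_p)^2}{2p-H_p}\cdot f_{o_1,\dots,o_p}(\{o_1,\dots,o_p\}).$$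
   Context: $H_p=1+\frac12+\cdots+\frac1p$ is the $p$-th harmonic number. A weighted coverage function on $W$ is a function $f(S)=\sum_{u\in\bigcup_{v\in S}v}a(u)$, where each element $v\in W$ is identified with a subset of a finite universe $U$ and $a:U\to\mathbb{R}_{\ge0}$ are weights. *)

(* Defs.v *)
From HB Require Import structures.
From mathcomp Require Import all_boot all_order all_algebra.
From mathcomp Require Import reals.
Set Implicit Arguments. Unset Strict Implicit. Unset Printing Implicit Defensive.
Import Order.TTheory GRing.Theory Num.Theory.
Local Open Scope ring_scope.

Definition harmonic (R : realType) (p : nat) : R :=
  \sum_(i < p) (i.+1%:R)^-1.

Definition is_coverage (R : realType) (T : finType) (f : {set T} -> R) : Prop :=
  exists (U : finType) (a : U -> R) (c : T -> {set U}),
    (forall u, 0 <= a u) /\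
    (forall S : {set T}, f S = \sum_(u in \bigcup_(v in S) c v) a u).

(* o picks one element o_i from each block W_i = blk^-1(i). *)
Definition is_choice (p : nat) (T : finType) (blk : T -> 'I_p) (o : 'I_p -> T) : Prop :=
  forall i, blk (o i) = i.

(* Main.v *)
Require Import Defs.
From HB Require Import structures.
From mathcomp Require Import all_boot all_order all_algebra.
From mathcomp Require Import reals.
From mathcomp Require sequences.
From mathcomp Require Import exp.
Local Notation expR := sequences.expR.
From mathcomp Require Import ring lra zify.
Import Order.TTheory GRing.Theory Num.Theory.
Local Open Scope ring_scope.

Definition uu (R : realType) (p t : nat) : R := Num.sqrt ((p - t)%:R / p%:R).
Definition rr (R : realType) (p t : nat) : R := uu R p t - uu R p t.+1.

Lemma uu_ge0 (R : realType) p t : 0 <= uu R p t.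
Proof. exact: sqrtr_ge0. Qed.

Lemma uu_sq (R : realType) p t : uu R p t ^+ 2 = (p - t)%:R / p%:R.
Proof. by rewrite sqr_sqrtr // divr_ge0. Qed.

Lemma uu_gt0 (R : realType) p t : (t < p)%N -> 0 < uu R p t.
Proof.
move=> tp; rewrite sqrtr_gt0 divr_gt0 // ltr0n; last by apply: leq_ltn_trans tp.
by rewrite subn_gt0.
Qed.

Lemma uu0 (R : realType) p : (0 < p)%N -> uu R p 0 = 1.
Proof. by move=> p0; rewrite /uu subn0 divff ?sqrtr1 // pnatr_eq0 -lt0n. Qed.

Lemma uu_le (R : realType) p t : uu R p t.+1 <= uu R p t.
Proof.
rewrite /uu ler_sqrt ?divr_ge0 // ler_wpM2r ?invr_ge0 // ler_nat.
by apply: leq_sub2l.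
Qed.

Lemma rr_ge0 (R : realType) p t : 0 <= rr R p t.
Proof. by rewrite /rr subr_ge0 uu_le. Qed.

Lemma rr_key (R : realType) p t : (t < p)%N ->
  rr R p t * (uu R p t + uu R p t.+1) = p%:R^-1.
Proof.
move=> tp; have p0 : p%:R != 0 :> R by rewrite pnatr_eq0 -lt0n; apply: leq_ltn_trans tp.
have -> : rr R p t * (uu R p t + uu R p t.+1) = uu R p t ^+ 2 - uu R p t.+1 ^+ 2.
  by rewrite /rr; ring.
rewrite !uu_sq -mulrBl -natrB; last by apply: leq_sub2l.
have -> : (p - t - (p - t.+1) = 1)%N by lia.
by rewrite mul1r.
Qed.

Definition ll (R : realType) (p t : nat) : R := ln (uu R p t.+1) - ln (uu R p t).

Lemma c_eq (R : realType) p t : (t < p)%N ->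
  rr R p t * uu R p t.+1 *+ 2 = p%:R^-1 - rr R p t ^+ 2.
Proof.
move=> tp; rewrite -(rr_key R p t tp) /rr; ring.
Qed.

Lemma rho_le (R : realType) p t : (t.+1 < p)%N ->
  rr R p t * (uu R p t.+1 *+ 2) <= p%:R^-1.
Proof.
move=> tp; rewrite -(rr_key R p t (ltnW tp)).
have h1 := rr_ge0 R p t; have h2 := uu_le R p t.
rewrite mulr2n; nra.
Qed.

Lemma rho_ge (R : realType) p t : (t < p)%N ->
  p%:R^-1 <= rr R p t * (uu R p t *+ 2).
Proof.
move=> tp; rewrite -(rr_key R p t tp).
have h1 := rr_ge0 R p t; have h2 := uu_le R p t.
rewrite mulr2n; nra.
Qed.

Lemma ln_upper (R : realType) (x : R) : 0 < x -> ln x <= x - 1.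
Proof.
move=> x0; have h := @le_ln1Dx R (x - 1).
have e : 1 + (x - 1) = x by ring.
rewrite e in h; apply: h; lra.
Qed.

Lemma ln_lower (R : realType) (x : R) : 0 < x -> 1 - x^-1 <= ln x.
Proof.
move=> x0; have := @ln_upper R x^-1; rewrite invr_gt0 => /(_ x0).
rewrite lnV ?posrE //; lra.
Qed.

Lemma ll_bounds (R : realType) p t : (t.+1 < p)%N ->
  rr R p t / uu R p t <= - ll R p t <= rr R p t / uu R p t.+1.
Proof.
move=> tp.
have u1 : 0 < uu R p t.+1 by apply: uu_gt0.
have u0 : 0 < uu R p t by apply: uu_gt0; apply: ltn_trans tp.
have -> : - ll R p t = ln (uu R p t / uu R p t.+1).
  by rewrite /ll lnM ?posrE ?invr_gt0 // lnV ?posrE //; ring.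
have hx : 0 < uu R p t / uu R p t.+1 by apply: divr_gt0.
apply/andP; split.
  apply: le_trans _ (ln_lower R _ hx).
  by rewrite invf_div /rr mulrBl divff ?gt_eqF.
by rewrite (le_trans (ln_upper R _ hx)) // /rr mulrBl divff ?gt_eqF.
Qed.

Lemma aa_exp (R : realType) p l : (l.+1 < p)%N ->
  uu R p l.+1 / uu R p l = expR (ll R p l).
Proof.
move=> lp.
have u1 : 0 < uu R p l.+1 by apply: uu_gt0.
have u0 : 0 < uu R p l by apply: uu_gt0; apply: ltn_trans lp.
by rewrite /ll expRB !lnK ?posrE.
Qed.

Lemma uu_exp (R : realType) p t : (t.+1 < p)%N ->
  uu R p t.+1 = expR (\sum_(0 <= l < t.+1) ll R p l).
Proof.
move=> tp.
have u1 : 0 < uu R p t.+1 by apply: uu_gt0.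
rewrite /ll (telescope_sumr (fun k => ln (uu R p k))) // uu0; last by apply: ltn_trans tp.
by rewrite ln1 subr0 lnK ?posrE.
Qed.

Lemma claimA (R : realType) p (T : finType) (S : {set T}) (b : T -> nat) t :
  (t.+1 < p)%N ->
  uu R p t.+1 * (1 + \sum_(s in S | (b s <= t)%N) ll R p (b s)
                    - \sum_(0 <= l < t.+1) ll R p l)
  <= \prod_(s in S | (b s <= t)%N) (uu R p (b s).+1 / uu R p (b s)).
Proof.
move=> tp.
rewrite [X in _ <= X](eq_bigr (fun s => expR (ll R p (b s)))); last first.
  move=> s /andP[_ hs]; apply: aa_exp; apply: leq_ltn_trans tp; by rewrite ltnS.
rewrite -expR_sum uu_exp //.
set X := \sum_(s in S | _) _; set Y := \sum_(0 <= l < t.+1) _.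
have -> : X = Y + (X - Y) by ring.
rewrite expRD ler_pM2l ?expR_gt0 //.
have := expR_ge1Dx (X - Y); lra.
Qed.

Lemma sumG {R : realType} (f : nat -> R) l N :
  \sum_(0 <= t < N | (l <= t)%N) f t = \sum_(l <= t < N) f t.
Proof.
case: (leqP l N) => hl.
  rewrite (big_cat_nat (leq0n l) hl) /= [X in X + _]big_nat_cond [X in X + _]big1 ?add0r; last first.
    by move=> i /andP[/andP[_ il] li]; move: il; rewrite ltnNge li.
  rewrite big_nat_cond [RHS]big_nat_cond; apply: eq_bigl => i.
  by case: (l <= i)%N; rewrite ?andbT ?andbF.
rewrite [RHS]big_geq ?(ltnW hl) // big_nat_cond big1 // => i /andP[/andP[_ iN] hi].
move: hl; rewrite ltnNge => /negP; case.
by apply: leq_trans hi (ltnW iN).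
Qed.

Lemma sumG' {R : realType} (g : nat -> R) t N : (t < N)%N ->
  \sum_(0 <= l < N | (l <= t)%N) g l = \sum_(0 <= l < t.+1) g l.
Proof.
move=> tN; rewrite (big_cat_nat (leq0n t.+1) tN) /=.
rewrite [X in _ + X]big_nat_cond [X in _ + X]big1 ?addr0; last first.
  by move=> i /andP[/andP[ti _] hi]; move: hi; rewrite leqNgt ti.
rewrite big_nat_cond [RHS]big_nat_cond; apply: eq_bigl => i.
by rewrite ltnS andbT; case: (i <= t)%N; rewrite ?andbT ?andbF.
Qed.

Lemma exch1 {R : realType} (f g : nat -> R) N :
  \sum_(0 <= t < N) f t * \sum_(0 <= l < t.+1) g l
  = \sum_(0 <= l < N) g l * \sum_(l <= t < N) f t.
Proof.
transitivity (\sum_(0 <= t < N) \sum_(0 <= l < N) (if (l <= t)%N then f t * g l else 0)).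
  rewrite big_nat [RHS]big_nat; apply: eq_bigr => t /andP[_ tN].
  by rewrite -(sumG' g t N tN) big_distrr /= big_mkcond.
rewrite exchange_big /= big_nat [RHS]big_nat; apply: eq_bigr => l _.
by rewrite -(sumG f l N) big_distrr /= [RHS]big_mkcond; apply: eq_bigr => t _; case: ifP; rewrite // mulrC.
Qed.

Lemma exch2 {R : realType} (T : finType) (S : {set T}) (b : T -> nat) (f : nat -> R) (h : T -> R) N :
  \sum_(0 <= t < N) f t * \sum_(s in S | (b s <= t)%N) h s
  = \sum_(s in S) h s * \sum_(b s <= t < N) f t.
Proof.
transitivity (\sum_(0 <= t < N) \sum_(s in S) (if (b s <= t)%N then f t * h s else 0)).
  apply: eq_bigr => t _.
  by rewrite big_distrr /= big_mkcondr.
rewrite exchange_big /=; apply: eq_bigr => s _.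
by rewrite -(sumG f (b s) N) big_distrr /= [RHS]big_mkcond; apply: eq_bigr => t _; case: ifP; rewrite // mulrC.
Qed.

Definition cc (R : realType) p t : R := rr R p t * uu R p t.+1.
Definition Sl (R : realType) p l : R := \sum_(l <= t < p.-1) cc R p t.
Definition EE (R : realType) p : R := \sum_(0 <= t < p.-1) rr R p t ^+ 2.

Lemma cc_eq (R : realType) p t : (t < p)%N -> cc R p t = (p%:R^-1 - rr R p t ^+ 2) / 2.
Proof.
move=> tp; rewrite -(c_eq R p t tp) /cc mulr2n; by field.
Qed.

Lemma cc_ge0 (R : realType) p t : 0 <= cc R p t.
Proof. by rewrite /cc mulr_ge0 ?rr_ge0 ?uu_ge0. Qed.

Lemma Sl_ge0 (R : realType) p l : 0 <= Sl R p l.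
Proof. by rewrite /Sl sumr_ge0 // => t _; apply: cc_ge0. Qed.

Lemma EE_ge0 (R : realType) p : 0 <= EE R p.
Proof. by rewrite /EE sumr_ge0 // => t _; rewrite sqr_ge0. Qed.

Lemma Sl_le (R : realType) p l : (0 < p)%N ->
  Sl R p l <= (p.-1 - l)%:R * (p%:R^-1 / 2).
Proof.
move=> p0; rewrite /Sl mulr_natl -sumr_const_nat; apply: ler_sum_nat => t /andP[_ tN].
have tp : (t < p)%N by apply: (leq_trans tN); exact: leq_pred.
rewrite cc_eq //; have := sqr_ge0 (rr R p t); lra.
Qed.

Lemma Sl_ge (R : realType) p l : (0 < p)%N ->
  (p.-1 - l)%:R * (p%:R^-1 / 2) - EE R p / 2 <= Sl R p l.
Proof.
move=> p0.
have e1 : Sl R p l = \sum_(l <= t < p.-1) (p%:R^-1 / 2)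
                     - (\sum_(l <= t < p.-1) rr R p t ^+ 2) / 2.
  rewrite mulr_suml -sumrB /Sl; apply: eq_big_nat => t /andP[_ tN].
  have tp : (t < p)%N by apply: (leq_trans tN); exact: leq_pred.
  by rewrite cc_eq //; ring.
rewrite e1 sumr_const_nat -mulr_natl.
have e2 : \sum_(l <= t < p.-1) rr R p t ^+ 2 <= EE R p.
  case: (leqP l p.-1) => hl.
    rewrite /EE (big_cat_nat (leq0n l) hl) /= lerDr.
    by apply: sumr_ge0 => t _; rewrite sqr_ge0.
  by rewrite big_geq ?(ltnW hl) // EE_ge0.
lra.
Qed.

Lemma rr_sq_le (R : realType) p t : (t.+1 < p)%N ->
  rr R p t ^+ 2 <= (4 * p%:R)^-1 * ((p.-1 - t)%:R)^-1.
Proof.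
move=> tp.
have p0 : (0 < p)%N by apply: leq_ltn_trans tp.
have pR : 0 < p%:R :> R by rewrite ltr0n.
set x := rr R p t; set y := uu R p t.+1.
have x0 : 0 <= x by apply: rr_ge0.
have y0 : 0 < y by apply: uu_gt0.
have hD : (p.-1 - t)%:R = p%:R * y ^+ 2 :> R.
  rewrite /y uu_sq mulrC divfK ?gt_eqF //; congr (_%:R); lia.
have Dpos : 0 < (p.-1 - t)%:R :> R by rewrite hD mulr_gt0 // exprn_gt0.
have h1 : x * (y *+ 2) <= p%:R^-1 by apply: rho_le.
have h2 : p%:R * (x * (y *+ 2)) <= 1.
  have := mulfV (lt0r_neq0 pR); nra.
have h3 : x ^+ 2 * (4 * p%:R * (p.-1 - t)%:R) <= 1.
  have -> : x ^+ 2 * (4 * p%:R * (p.-1 - t)%:R) = (p%:R * (x * (y *+ 2))) ^+ 2.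
    by rewrite hD mulr2n; ring.
  have h4 : 0 <= p%:R * (x * (y *+ 2)) by rewrite mulr2n; nra.
  move: h2 h4; set z := p%:R * (x * (y *+ 2)); move=> h2 h4; nra.
have hpos : 0 < 4 * p%:R * (p.-1 - t)%:R :> R by rewrite !mulr_gt0.
have e : (4 * p%:R)^-1 * ((p.-1 - t)%:R)^-1 = 1 / (4 * p%:R * (p.-1 - t)%:R) :> R.
  by rewrite mul1r [RHS]invfM.
by rewrite e ler_pdivlMr.
Qed.

Lemma negll_Sl_le (R : realType) p l : (l.+1 < p)%N ->
  - ll R p l * Sl R p l <= (4 * p%:R)^-1.
Proof.
move=> lp.
have p0 : (0 < p)%N by apply: leq_ltn_trans lp.
have pR : 0 < p%:R :> R by rewrite ltr0n.
have y0 : 0 < uu R p l.+1 by apply: uu_gt0.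
have u0 : 0 < uu R p l by apply: uu_gt0; apply: ltn_trans lp.
have /andP[hA1 hA2] := ll_bounds R p l lp.
set A := - ll R p l in hA1 hA2 *.
set y := uu R p l.+1 in y0 hA2 *.
have A0 : 0 <= A by apply: le_trans hA1; rewrite divr_ge0 ?rr_ge0 // ltW.
rewrite ler_pdivlMr // in hA2.
have hS := Sl_le R p l p0.
have hy : (p.-1 - l)%:R * p%:R^-1 = y ^+ 2 :> R.
  by rewrite /y uu_sq; congr (_%:R / _); lia.
have hS' : Sl R p l <= y ^+ 2 / 2 by rewrite -hy; lra.
have hS0 := Sl_ge0 R p l.
have hr := rho_le R p l lp; rewrite -/y in hr.
have k1 : A * Sl R p l <= A * (y ^+ 2 / 2) by rewrite ler_wpM2l.
have k2 : A * y * y <= rr R p l * y by rewrite ler_wpM2r // ltW.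
rewrite invfM; rewrite mulr2n in hr; nra.
Qed.

Lemma ll_Sl_ge (R : realType) p l : (0 < p)%N ->
  - (4 * p%:R)^-1 <= ll R p l * Sl R p l.
Proof.
move=> p0; case: (ltnP l.+1 p) => lp.
  have := negll_Sl_le R p l lp; rewrite mulNr; lra.
have -> : Sl R p l = 0.
  rewrite /Sl big_geq //; move: lp; case: p p0 => // p' _; rewrite ltnS.
rewrite mulr0 oppr_le0 invr_ge0 mulr_ge0 //.
Qed.

Lemma negll_Sl_ge (R : realType) p l : (l.+1 < p)%N ->
  (4 * p%:R)^-1 - ((4 * p%:R)^-1 + EE R p / 4) * ((p - l)%:R)^-1
  <= - ll R p l * Sl R p l.
Proof.
move=> lp.
have p0 : (0 < p)%N by apply: leq_ltn_trans lp.
have pR : 0 < p%:R :> R by rewrite ltr0n.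
have u0 : 0 < uu R p l by apply: uu_gt0; apply: ltn_trans lp.
have /andP[hA1 hA2] := ll_bounds R p l lp.
set A := - ll R p l in hA1 hA2 *.
set x := uu R p l in u0 hA1 *.
rewrite ler_pdivrMr // in hA1.
have hr := rho_ge R p l (ltn_trans (ltnSn l) lp); rewrite -/x mulr2n in hr.
set D := (p - l)%:R : R.
have D0 : 0 < D by rewrite /D ltr0n subn_gt0; apply: ltn_trans lp.
have hD : D = p%:R * x ^+ 2.
  by rewrite /x uu_sq mulrC divfK ?gt_eqF.
have hN : (p.-1 - l)%:R = D - 1 :> R.
  have : (p.-1 - l)%:R + 1 = D :> R by rewrite natr1 /D; congr (_%:R); lia.
  lra.
have hip := mulfV (lt0r_neq0 pR).
set ip := p%:R^-1 in hr hip *.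
have h2D : 1 <= A * (D *+ 2).
  have k1 : (A * x - rr R p l) * (p%:R * x) >= 0.
    by apply: mulr_ge0; [lra | apply: mulr_ge0; apply: ltW].
  have k2 : p%:R * (rr R p l * (x + x) - ip) >= 0 by apply: mulr_ge0; [apply: ltW | lra].
  rewrite hD mulr2n; nra.
have hw : (D *+ 2)^-1 <= A.
  rewrite -[_^-1]mul1r ler_pdivrMr //; rewrite mulrn_wgt0 //.
have hS := Sl_ge R p l p0; rewrite hN in hS.
have hS0 := Sl_ge0 R p l.
have k3 : (D *+ 2)^-1 * Sl R p l <= A * Sl R p l by rewrite ler_wpM2r.
have k4 : (D *+ 2)^-1 * ((D - 1) * (ip / 2) - EE R p / 2) <= (D *+ 2)^-1 * Sl R p l.
  by rewrite ler_wpM2l // invr_ge0 mulrn_wge0 // ltW.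
have e : (D *+ 2)^-1 * ((D - 1) * (ip / 2) - EE R p / 2)
         = (4 * p%:R)^-1 - ((4 * p%:R)^-1 + EE R p / 4) * D^-1.
  rewrite /ip; field.
  by rewrite (lt0r_neq0 D0) (lt0r_neq0 pR).
lra.
Qed.

Lemma harm_ge (R : realType) p N : (N <= p)%N ->
  \sum_(0 <= t < N) (t.+1%:R)^-1 <= harmonic R p.
Proof.
move=> Np; rewrite /harmonic -(big_mkord xpredT (fun i => (i.+1%:R)^-1)).
rewrite (big_cat_nat (leq0n N) Np) /= lerDl.
by apply: sumr_ge0 => i _; rewrite invr_ge0.
Qed.

Lemma harm1 (R : realType) p :
  \sum_(0 <= t < p.-1) ((p.-1 - t)%:R)^-1 <= harmonic R p :> R.
Proof.
rewrite big_nat_rev /= add0n.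
rewrite (eq_big_nat _ _ (F2 := fun t => (t.+1%:R)^-1)); last first.
  by move=> t /andP[_ tN]; congr (_%:R^-1); lia.
by apply: harm_ge; exact: leq_pred.
Qed.

Lemma harm2 (R : realType) p :
  \sum_(0 <= t < p.-1) ((p - t)%:R)^-1 <= harmonic R p :> R.
Proof.
rewrite big_nat_rev /= add0n.
apply: le_trans _ (harm_ge R p p.-1 (leq_pred p)).
apply: ler_sum_nat => t /andP[_ tN].
have -> : (p - (p.-1 - t.+1))%N = t.+2 by lia.
by rewrite lef_pV2 ?posrE ?ltr0n // ler_nat.
Qed.

Lemma harm3 (R : realType) p : (3 <= p)%N -> 11 / 6 <= harmonic R p.
Proof.
move=> p3; apply: le_trans _ (harm_ge R p 3 p3).
rewrite !big_nat_recr //= big_geq //.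
have e : (11 / 6 : R) = 0 + 1%:R^-1 + 2%:R^-1 + 3%:R^-1 by field.
by rewrite e.
Qed.

Lemma harm_ge0 (R : realType) p : 0 <= harmonic R p.
Proof. by rewrite /harmonic sumr_ge0 // => i _; rewrite invr_ge0. Qed.

Lemma harm_le (R : realType) p : harmonic R p <= p%:R.
Proof.
rewrite /harmonic; have -> : p%:R = \sum_(i < p) (1 : R) by rewrite sumr_const card_ord.
by apply: ler_sum => i _; rewrite invf_le1 ?ltr0n // ler1n.
Qed.

Lemma ana (R : realType) p (T : finType) (S : {set T}) (b : T -> nat) :
  (3 <= p)%N -> (#|S| <= p)%N ->
  1 / 2 - p%:R^-1 * (3 / 4 + harmonic R p / 4 + harmonic R p * (2 + harmonic R p) / 16)
  <= \sum_(0 <= t < p.-1) rr R p t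
       * \prod_(s in S | (b s <= t)%N) (uu R p (b s).+1 / uu R p (b s)).
Proof.
move=> p3 Sp.
have p0 : (0 < p)%N by apply: leq_trans p3.
have pR : 0 < p%:R :> R by rewrite ltr0n.
set H := harmonic R p.
pose X t := \sum_(s in S | (b s <= t)%N) ll R p (b s).
pose Y t := \sum_(0 <= l < t.+1) ll R p l.
have st1 : \sum_(0 <= t < p.-1) cc R p t * (1 + X t - Y t)
   <= \sum_(0 <= t < p.-1) rr R p t
       * \prod_(s in S | (b s <= t)%N) (uu R p (b s).+1 / uu R p (b s)).
  apply: ler_sum_nat => t /andP[_ tN]; rewrite /cc -mulrA.
  apply: ler_wpM2l; first exact: rr_ge0.
  apply: claimA; move: tN; case: p {p3 p0 pR Sp H X Y} => // p'.
apply: le_trans st1.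
have e2 : \sum_(0 <= t < p.-1) cc R p t * (1 + X t - Y t)
   = \sum_(0 <= t < p.-1) cc R p t + \sum_(0 <= t < p.-1) cc R p t * X t
     - \sum_(0 <= t < p.-1) cc R p t * Y t.
  rewrite -big_split -sumrB /=; apply: eq_bigr => t _; ring.
rewrite e2 {e2}.
rewrite /X exch2 /Y exch1.
have hbase : \sum_(0 <= t < p.-1) cc R p t
    = (p.-1)%:R * (p%:R^-1 / 2) - EE R p / 2.
  have -> : (p.-1)%:R * (p%:R^-1 / 2) = \sum_(0 <= t < p.-1) (p%:R^-1 / 2) :> R.
    by rewrite sumr_const_nat subn0 mulr_natl.
  rewrite /EE mulr_suml -sumrB.
  apply: eq_big_nat => t /andP[_ tN].
  have tp : (t < p)%N by apply: (leq_trans tN); exact: leq_pred.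
  by rewrite cc_eq //; ring.
have hS : - (#|S|%:R * (4 * p%:R)^-1)
    <= \sum_(s in S) ll R p (b s) * \sum_(b s <= t < p.-1) cc R p t.
  rewrite mulr_natl -sumr_const -sumrN; apply: ler_sum => s _.
  exact: (ll_Sl_ge R p (b s) p0).
have hL0 : \sum_(0 <= l < p.-1) ((4 * p%:R)^-1 - ((4 * p%:R)^-1 + EE R p / 4) * ((p - l)%:R)^-1)
    <= \sum_(0 <= l < p.-1) - (ll R p l * \sum_(l <= t < p.-1) cc R p t).
  apply: ler_sum_nat => l /andP[_ lN].
  have lp : (l.+1 < p)%N by move: lN; case: p {p3 p0 pR Sp H X Y hS hbase} => // p'.
  by have := negll_Sl_ge R p l lp; rewrite mulNr.
rewrite sumrN sumrB sumr_const_nat subn0 -mulr_sumr in hL0.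
have hH2 := harm2 R p; rewrite -/H in hH2.
have hE0 := EE_ge0 R p.
have hL : ((4 * p%:R)^-1 + EE R p / 4) * \sum_(0 <= l < p.-1) ((p - l)%:R)^-1
          <= ((4 * p%:R)^-1 + EE R p / 4) * H.
  apply: ler_wpM2l => //; apply: addr_ge0; first by rewrite invr_ge0 mulr_ge0 // ltW.
  by apply: divr_ge0.
have hE : EE R p <= (4 * p%:R)^-1 * H.
  apply: le_trans (_ : \sum_(0 <= t < p.-1) (4 * p%:R)^-1 * ((p.-1 - t)%:R)^-1 <= _).
    rewrite /EE; apply: ler_sum_nat => t /andP[_ tN]; apply: rr_sq_le.
    by move: tN; case: p {p3 p0 pR Sp H X Y hS hbase hL0 hH2 hE0 hL} => // p'.
  rewrite -mulr_sumr; apply: ler_wpM2l; first by rewrite invr_ge0 mulr_ge0 // ltW.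
  exact: harm1.
rewrite hbase.
have hSp : (#|S|%:R : R) <= p%:R by rewrite ler_nat.
have hip := mulfV (lt0r_neq0 pR).
have e4 : (4 * p%:R)^-1 = p%:R^-1 / 4 :> R by rewrite invfM mulrC.
rewrite e4 in hS hL0 hL hE.
have hN : (p.-1)%:R = p%:R - 1 :> R.
  have : (p.-1)%:R + 1 = p%:R :> R by rewrite natr1 prednK.
  lra.
rewrite hN in hL0 *.
set E := EE R p in hL0 hL hE hE0 *.
set ip := p%:R^-1 in hL0 hL hE hS hip *.
set sL := \sum_(0 <= l < p.-1) ll R p l * _ in hL0 *.
set sS := \sum_(s in S) _ in hS *.
set K := \sum_(0 <= l < p.-1) _ in hL hL0.
have H0 := harm_ge0 R p; rewrite -/H in H0.
have k1 : (ip / 4 * H - E) * (2 + H) >= 0 by apply: mulr_ge0; lra.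
have k2 : (p%:R - #|S|%:R) * (ip / 4) >= 0.
  apply: mulr_ge0; first lra.
  by apply: divr_ge0 => //; rewrite /ip invr_ge0 ltW.
nra.
Qed.

Definition aa (R : realType) p t : R := uu R p t.+1 / uu R p t.

Lemma aa_ge0 (R : realType) p t : 0 <= aa R p t.
Proof. by rewrite /aa divr_ge0 ?uu_ge0. Qed.

Lemma aa_le1 (R : realType) p t : aa R p t <= 1.
Proof.
rewrite /aa; have [u0|u0] := eqVneq (uu R p t) 0.
  by rewrite u0 invr0 mulr0 ler01.
have u0' : 0 < uu R p t by rewrite lt_def u0 uu_ge0.
by rewrite ler_pdivrMr // mul1r uu_le.
Qed.

Definition piw (R : realType) p (T : finType) (blk : T -> 'I_p) (x : T) (bb : bool) : R :=
  if bb then 1 - aa R p (blk x) else aa R p (blk x).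
Arguments piw R {p T} blk x bb.

Definition wt (R : realType) p (T : finType) (blk : T -> 'I_p) (w : {ffun T -> bool}) : R :=
  (2 * p%:R) * \prod_x piw R blk x (w x).
Arguments wt R {p T} blk w.

Definition cov p (T : finType) (blk : T -> 'I_p) (o : 'I_p -> T) (v : T) : {set {ffun T -> bool}} :=
  [set w : {ffun T -> bool} | [forall t : 'I_p, (t < blk v)%N ==> ~~ w (o t)]
                              && (w v || (blk v == p.-1 :> nat))].
Arguments cov {p T} blk o v.

Definition FF (R : realType) p (T : finType) (blk : T -> 'I_p) (o : 'I_p -> T) (S : {set T}) : R :=
  \sum_(u in \bigcup_(v in S) cov blk o v) wt R blk u.
Arguments FF R {p T} blk o S.

Lemma piw_ge0 (R : realType) p (T : finType) (blk : T -> 'I_p) x bb : 0 <= piw R blk x bb.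
Proof. by rewrite /piw; case: bb; rewrite ?subr_ge0 ?aa_le1 ?aa_ge0. Qed.

Lemma wt_ge0 (R : realType) p (T : finType) (blk : T -> 'I_p) w : 0 <= wt R blk w.
Proof.
by rewrite /wt mulr_ge0 ?mulr_ge0 ?ler0n // prodr_ge0 // => x _; apply: piw_ge0.
Qed.

Lemma sum_prod_ffun (R : realType) (T : finType) (G : T -> bool -> R) :
  \sum_(w : {ffun T -> bool}) \prod_x G x (w x) = \prod_x (G x true + G x false).
Proof.
have -> : \prod_x (G x true + G x false) = \prod_x \sum_(bb : bool) G x bb.
  by apply: eq_bigr => x _; rewrite big_bool.
by rewrite bigA_distr_bigA.
Qed.

Lemma total (R : realType) p (T : finType) (blk : T -> 'I_p) :
  \sum_w wt R blk w = 2 * p%:R.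
Proof.
rewrite /wt -mulr_sumr sum_prod_ffun big1 ?mulr1 // => x _.
by rewrite /piw subrK.
Qed.
Arguments total R {p T} blk.

Lemma cover_all p (T : finType) (blk : T -> 'I_p) (o : 'I_p -> T) :
  (0 < p)%N -> is_choice blk o ->
  \bigcup_(v in [set o i | i : 'I_p]) cov blk o v = setT.
Proof.
move=> p0 ho; apply/setP => w; rewrite inE; apply/bigcupP.
case: (boolP [exists i : 'I_p, w (o i)]) => [/existsP [i0 wi0] | /existsPn nex].
  case: (@arg_minnP _ i0 (fun i => w (o i)) (fun i : 'I_p => nat_of_ord i) wi0) => i wi imin.
  exists (o i); first by apply: imset_f.
  rewrite inE ho wi orTb andbT; apply/forallP => t; apply/implyP => ti.
  by apply/negP => wt0; have := imin t wt0; rewrite leqNgt ti.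
have lastp : (p.-1 < p)%N by rewrite prednK.
exists (o (Ordinal lastp)); first by apply: imset_f.
rewrite inE ho /= eqxx orbT andbT; apply/forallP => t; apply/implyP => _.
exact: nex.
Qed.

Lemma FF_setT (R : realType) p (T : finType) (blk : T -> 'I_p) (o : 'I_p -> T) :
  (0 < p)%N -> is_choice blk o ->
  FF R blk o setT = FF R blk o [set o i | i : 'I_p].
Proof.
move=> p0 ho; rewrite /FF cover_all //.
have -> : \bigcup_(v in setT) cov blk o v = setT.
  apply/setP => w; rewrite inE; apply/bigcupP.
  have : w \in \bigcup_(v in [set o i | i : 'I_p]) cov blk o v by rewrite cover_all // inE.
  by case/bigcupP => v _ wv; exists v; [rewrite inE | exact: wv].
by [].
Qed.

Lemma FF_total (R : realType) p (T : finType) (blk : T -> 'I_p) (o : 'I_p -> T) :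
  (0 < p)%N -> is_choice blk o ->
  FF R blk o [set o i | i : 'I_p] = 2 * p%:R.
Proof.
move=> p0 ho; rewrite /FF cover_all // -(total R blk).
by apply: eq_bigl => w; rewrite inE.
Qed.

Lemma FF_indist (R : realType) p (T : finType) (blk : T -> 'I_p) (i : 'I_p) (o o' : 'I_p -> T) :
  (forall j : 'I_p, (j < i)%N -> o j = o' j) ->
  forall S : {set T}, S \subset [set x | (blk x <= i)%N] ->
  FF R blk o S = FF R blk o' S.
Proof.
move=> hoo S hS; rewrite /FF.
have -> : \bigcup_(v in S) cov blk o v = \bigcup_(v in S) cov blk o' v.
  apply: eq_bigr => v vS; apply/setP => w; rewrite !inE; congr (_ && _).
  apply: eq_forallb => t; case tv: (t < blk v)%N => //=.
  have := subsetP hS v vS; rewrite inE => vi.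
  by rewrite hoo // (leq_trans tv vi).
by [].
Qed.

Definition okf p (T : finType) (blk : T -> 'I_p) (o : 'I_p -> T) (S : {set T}) (t : nat)
  (x : T) (bb : bool) : bool :=
  [&& ((blk x == t :> nat) && (x == o (blk x))) ==> bb,
      ((blk x < t)%N && (x == o (blk x))) ==> ~~ bb &
      ((x \in S) && (blk x <= t)%N) ==> ~~ bb].
Arguments okf {p T} blk o S t x bb.

Definition Ev p (T : finType) (blk : T -> 'I_p) (o : 'I_p -> T) (S : {set T}) (t : nat)
  : {set {ffun T -> bool}} := [set w : {ffun T -> bool} | [forall x, okf blk o S t x (w x)]].
Arguments Ev {p T} blk o S t.

Lemma prod_aa (R : realType) p t : (0 < p)%N -> (t <= p)%N ->
  \prod_(0 <= j < t) aa R p j = uu R p t.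
Proof.
move=> p0; elim: t => [|t IH] tp.
  by rewrite big_geq // uu0.
rewrite big_nat_recr; last exact: leq0n.
rewrite IH; last exact: ltnW.
rewrite /aa; change (uu R p t * (uu R p t.+1 / uu R p t) = uu R p t.+1).
rewrite mulrCA divff ?mulr1 //.
by apply: lt0r_neq0; apply: uu_gt0.
Qed.


Lemma notinO p (T : finType) (o : 'I_p -> T) (S : {set T}) x i :
  S \subset ~: [set o i | i : 'I_p] -> x \in S -> (x == o i) = false.
Proof.
move=> hS xS; apply/negP => /eqP xo; move: (subsetP hS x xS).
by rewrite xo in_setC imset_f.
Qed.




Lemma Ev_mass (R : realType) p (T : finType) (blk : T -> 'I_p) (o : 'I_p -> T) (S : {set T}) t :
  is_choice blk o -> S \subset ~: [set o i | i : 'I_p] -> (t.+1 < p)%N ->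
  \sum_(w in Ev blk o S t) wt R blk w
  = 2 * p%:R * (rr R p t * \prod_(s in S | (blk s <= t)%N) aa R p (blk s)).
Proof.
move=> ho hS tp.
have tp' : (t < p)%N by apply: ltn_trans tp.
have p0 : (0 < p)%N by apply: leq_ltn_trans tp.
pose i := Ordinal tp'.
pose G x bb := if okf blk o S t x bb then piw R blk x bb else 0.
have e1 : \sum_(w in Ev blk o S t) wt R blk w
          = 2 * p%:R * \sum_(w : {ffun T -> bool}) \prod_x G x (w x).
  rewrite big_mkcond mulr_sumr; apply: eq_bigr => w _.
  rewrite /Ev inE /wt; case: (boolP [forall x, _]) => [/forallP hall | /forallPn [x hx]].
    by congr (_ * _); apply: eq_bigr => x _; rewrite /G hall.
  by rewrite (bigD1 x) //= /G (negPf hx) mul0r mulr0.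
rewrite e1 sum_prod_ffun; congr (_ * _).
pose g1 x : R := if x == o i then 1 - aa R p t else 1.
pose g2 x : R := if (blk x < t)%N && (x == o (blk x)) then aa R p (blk x) else 1.
pose g3 x : R := if (x \in S) && (blk x <= t)%N then aa R p (blk x) else 1.
have e2 : forall x, G x true + G x false = g1 x * g2 x * g3 x.
  move=> x; rewrite /G /g1 /g2 /g3 /okf /piw.
  have c1 : ((blk x == t :> nat) && (x == o (blk x))) = (x == o i).
    apply/idP/idP => [/andP[/eqP bt /eqP xo] | /eqP xo].
      have bi : blk x = i by apply: val_inj.
      by rewrite xo bi.
    by rewrite xo ho /= !eqxx.
  rewrite c1.
  case: (eqVneq x (o i)) => [xo | xo] /=.
    have xS : (x \in S) = false.
      by apply/negP => xS; have := @notinO _ _ o S x i hS xS; rewrite xo eqxx.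
    have bx : (blk x < t)%N = false by rewrite xo ho ltnn.
    rewrite xS bx /= xo ho /=.
    by rewrite addr0 !mulr1.
  case c2 : ((blk x < t)%N && (x == o (blk x))) => /=.
    have xS : (x \in S) = false.
      move/andP: c2 => [_ /eqP xo2]; apply/negP => xS.
      by have := @notinO _ _ o S x (blk x) hS xS; rewrite -xo2 eqxx.
    by rewrite xS /= add0r mul1r mulr1.
  case c3 : ((x \in S) && (blk x <= t)%N) => /=.
    by rewrite add0r !mul1r.
  by rewrite subrK !mulr1.
rewrite (eq_bigr _ (fun x _ => e2 x)) [in LHS]big_split [in LHS]big_split /=.
have p1 : \prod_x g1 x = 1 - aa R p t.
  rewrite (bigD1 (o i)) //= /g1 eqxx big1 ?mulr1 //.
  by move=> x /negPf ->.
have p3 : \prod_x g3 x = \prod_(s in S | (blk s <= t)%N) aa R p (blk s).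
  by rewrite /g3 [RHS]big_mkcond.
have p2 : \prod_x g2 x = uu R p t.
  rewrite /g2 -big_mkcond /=.
  have e : \prod_(x | (blk x < t)%N && (x == o (blk x))) aa R p (blk x)
         = \prod_(x in [set o j | j in [set j : 'I_p | (j < t)%N]]) aa R p (blk x).
    apply: eq_bigl => x; apply/idP/idP => [/andP[bt /eqP xo] | /imsetP[j]].
      by apply/imsetP; exists (blk x); rewrite ?inE.
    by rewrite inE => jt ->; rewrite ho jt eqxx.
  rewrite e big_imset /=; last first.
    by move=> j1 j2 _ _ e12; rewrite -(ho j1) -(ho j2) e12.
  rewrite (eq_bigr (fun j : 'I_p => aa R p j)); last by move=> j _; rewrite ho.
  rewrite (eq_bigl (fun j : 'I_p => (j < t)%N)); last by move=> j; rewrite inE.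
  rewrite -(big_ord_widen _ (fun j => aa R p j) (ltnW tp')) -(big_mkord xpredT).
  exact: (prod_aa R p t p0 (ltnW tp')).
rewrite p1 p2 p3; congr (_ * _).
have u0 : uu R p t != 0 by apply: lt0r_neq0; apply: uu_gt0.
by rewrite /aa /rr mulrBl mul1r -mulrA mulVf // mulr1.
Qed.

Lemma Ev_lt p (T : finType) (blk : T -> 'I_p) (o : 'I_p -> T) (S : {set T}) t1 t2 w :
  is_choice blk o -> (t1 < t2)%N -> (t1 < p)%N ->
  w \in Ev blk o S t1 -> w \in Ev blk o S t2 -> False.
Proof.
move=> ho t12 t1p; rewrite !inE => /forallP h1 /forallP h2.
pose x := o (Ordinal t1p).
have := h1 x; have := h2 x; rewrite /okf /x !ho /= !eqxx t12 /=.
move=> /and3P[_ A _] /and3P[B _ _].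
by rewrite (negPf A) in B.
Qed.
Arguments Ev_lt {p T blk o S t1 t2 w}.

Lemma Ev_disj p (T : finType) (blk : T -> 'I_p) (o : 'I_p -> T) (S : {set T}) (t1 t2 : 'I_p.-1) :
  is_choice blk o -> t1 != t2 -> [disjoint Ev blk o S t1 & Ev blk o S t2].
Proof.
move=> ho ne; rewrite -setI_eq0; apply/eqP/setP => w; rewrite in_setI in_set0.
apply/negP => /andP[w1 w2].
have hp : forall t : 'I_p.-1, (t < p)%N.
  move=> t; apply: (leq_trans (ltn_ord t)); exact: leq_pred.
case: (ltngtP t1 t2) => [lt|gt|eq].
- exact: (Ev_lt ho lt (hp t1) w1 w2).
- exact: (Ev_lt ho gt (hp t2) w2 w1).
- by move: ne; rewrite (val_inj eq) eqxx.
Qed.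

Lemma Ev_sub p (T : finType) (blk : T -> 'I_p) (o : 'I_p -> T) (S : {set T}) t :
  is_choice blk o -> S \subset ~: [set o i | i : 'I_p] -> (t.+1 < p)%N ->
  Ev blk o S t \subset ~: \bigcup_(v in S) cov blk o v.
Proof.
move=> ho hS tp; apply/subsetP => w; rewrite !inE => /forallP hw.
apply/negP => /bigcupP [s sS]; rewrite inE => /andP [/forallP hf hs].
case: (leqP (blk s) t) => bst.
  have := hw s; rewrite /okf sS bst /=.
  have bl : (blk s == p.-1 :> nat) = false.
    apply/negP => /eqP e; move: bst tp; rewrite e; lia.
  move: hs; rewrite bl orbF => -> /=.
  by rewrite !andbF.
have tp' : (t < p)%N by apply: ltn_trans tp.
have := hf (Ordinal tp'); rewrite bst /= => /negPf wo.
have := hw (o (Ordinal tp')); rewrite /okf ho /= !eqxx wo /=.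
by [].
Qed.

Arguments Ev_sub {p T blk o S t}.

Lemma sum_subset (R : realType) (I : finType) (A B : {set I}) (f : I -> R) :
  A \subset B -> (forall i, 0 <= f i) -> \sum_(i in A) f i <= \sum_(i in B) f i.
Proof.
move=> AB f0; rewrite [X in _ <= X](bigID (mem A)) /=.
have -> : \sum_(i in B | i \in A) f i = \sum_(i in A) f i.
  apply: eq_bigl => i; case iA: (i \in A); rewrite ?andbT ?andbF //.
  by rewrite (subsetP AB i iA).
by rewrite lerDl sumr_ge0.
Qed.

Lemma FF_S (R : realType) p (T : finType) (blk : T -> 'I_p) (o : 'I_p -> T) (S : {set T}) :
  (3 <= p)%N -> is_choice blk o -> S \subset ~: [set o i | i : 'I_p] -> (#|S| <= p)%N ->
  FF R blk o S <= p%:R + harmonic R p ^+ 2.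
Proof.
move=> p3 ho hS Sp.
have p0 : (0 < p)%N by apply: leq_trans p3.
have pR : 0 < p%:R :> R by rewrite ltr0n.
set U := \bigcup_(v in S) cov blk o v.
have e1 : FF R blk o S = 2 * p%:R - \sum_(w in ~: U) wt R blk w.
  have h : \sum_w wt R blk w = \sum_(w in U) wt R blk w + \sum_(w in ~: U) wt R blk w.
    rewrite (bigID (mem U)) /=; congr (_ + _); apply: eq_bigl => w; by rewrite ?inE.
  rewrite (total R blk) in h; rewrite /FF -/U; lra.
have hp : forall t : 'I_p.-1, (t.+1 < p)%N.
  move=> t; have := ltn_ord t; move: (nat_of_ord t) => k; lia.
have e2 : \sum_(w in \bigcup_(i : 'I_p.-1) Ev blk o S i) wt R blk w <= \sum_(w in ~: U) wt R blk w.
  apply: sum_subset; last by move=> w; apply: wt_ge0.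
  apply/subsetP => w /bigcupP [i _ wi].
  exact: (subsetP (Ev_sub ho hS (hp i)) w wi).
rewrite (@partition_disjoint_bigcup _ _ _ _ _ (fun i : 'I_p.-1 => Ev blk o S i)) in e2; last first.
  by move=> i j; apply: Ev_disj.
rewrite (eq_bigr (fun i : 'I_p.-1 => 2 * p%:R * (rr R p i * \prod_(s in S | (blk s <= i)%N) aa R p (blk s)))) in e2; last first.
  by move=> i _; apply: Ev_mass.
rewrite -mulr_sumr in e2.
rewrite -(@big_mkord _ _ _ p.-1 (fun _ => true) (fun i => rr R p i * \prod_(s in S | (blk s <= i)%N) aa R p (blk s))) in e2.
have ha := ana R p T S (fun s => nat_of_ord (blk s)) p3 Sp.
have H3 := harm3 R p p3.
set H := harmonic R p in ha H3 *.
set Z := \sum_(0 <= i < p.-1) _ in e2.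
have hZ : 1 / 2 - p%:R^-1 * (3 / 4 + H / 4 + H * (2 + H) / 16) <= Z by exact: ha.
rewrite e1.
have hip := mulfV (lt0r_neq0 pR).
set ip := p%:R^-1 in hZ hip.
have k : (H - 11 / 6) * (7 * H + 41 / 6) >= 0 by apply: mulr_ge0; lra.
have k2 : 2 * p%:R * Z >= 2 * p%:R * (1 / 2 - ip * (3 / 4 + H / 4 + H * (2 + H) / 16)).
  by apply: ler_wpM2l => //; lra.
nra.
Qed.

Lemma small_p (R : realType) p : (0 < p)%N -> (p <= 2)%N -> p%:R <= harmonic R p ^+ 2.
Proof.
case: p => [|[|[|p]]] //= _ _; rewrite /harmonic.
  by rewrite big_ord1 /= invr1 expr1n.
rewrite big_ord_recr big_ord1 /=.
have e : (1%:R^-1 + 2%:R^-1 : R) = 3 / 2 by field.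
rewrite e; lra.
Qed.

Arguments FF_indist R {p T blk i o o'}.

Theorem lemma20 (R : realType) (p n : nat) (hp : (1 <= p)%N) (hn : (1 <= n)%N)
  (T : finType) (blk : T -> 'I_p)
  (hblk : forall i : 'I_p, #|[set x | blk x == i]| = n) :
  exists F : ('I_p -> T) -> {set T} -> R,
    (forall o, is_choice blk o -> is_coverage (F o)) /\
    (* indistinguishability *)
    (forall (i : 'I_p) o o', is_choice blk o -> is_choice blk o' ->
       (forall j : 'I_p, (j < i)%N -> o j = o' j) ->
       forall S : {set T}, S \subset [set x | (blk x <= i)%N] ->
         F o S = F o' S) /\
    (* value gap *)
    (forall o, is_choice blk o ->
       let O := [set o i | i : 'I_p] in
       F o setT = F o O /\
       F o O <= 2 * p%:R /\
       (forall S : {set T}, S \subset ~: O -> (#|S| <= p)%N ->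
          F o S <= p%:R + harmonic R p ^+ 2) /\
       p%:R + harmonic R p ^+ 2 <=
         (p%:R + harmonic R p ^+ 2) / (2 * p%:R - harmonic R p) * F o O).
Proof.
exists (fun o S => FF R blk o S).
split; [|split].
- move=> o ho; exists {ffun T -> bool}, (wt R blk), (cov blk o); split.
    by move=> w; apply: wt_ge0.
  by move=> S.
- move=> i o o' _ _ hoo S hS; exact: (FF_indist R hoo S hS).
move=> o ho O.
have FO : FF R blk o O = 2 * p%:R by apply: FF_total.
have pR : 0 < p%:R :> R by rewrite ltr0n.
split; first by apply: FF_setT.
split; first by rewrite FO.
split.
  move=> S hS Sp.
  case: (leqP 3 p) => p3; first exact: FF_S.
  apply: le_trans (_ : FF R blk o S <= 2 * p%:R) _.
    rewrite -(total R blk) [in X in _ <= X](eq_bigl (fun w => w \in [set: {ffun T -> bool}])); last first.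
      by move=> w; rewrite inE.
    rewrite /FF; apply: sum_subset; first exact: subsetT.
    by move=> w; apply: wt_ge0.
  have := small_p R p hp (p3 : (p <= 2)%N); lra.
rewrite FO.
have Hle := harm_le R p; have H0 := harm_ge0 R p.
set H := harmonic R p in Hle H0 *.
have d0 : 0 < 2 * p%:R - H by lra.
have A0 : 0 <= p%:R + H ^+ 2 by rewrite addr_ge0 ?sqr_ge0 // ltW.
have h1 : 1 <= 2 * p%:R / (2 * p%:R - H) by rewrite ler_pdivlMr // mul1r; lra.
have -> : (p%:R + H ^+ 2) / (2 * p%:R - H) * (2 * p%:R)
          = (p%:R + H ^+ 2) * (2 * p%:R / (2 * p%:R - H)) by ring.
by rewrite ler_peMr.
Qed.
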